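(* Let $\rho_1,\rho_2\in[\lambda_0,\lambda_1]$ be the thresholds defined below. Then the optimal action on the boundary of the rectangle $[\lambda_0,\lambda_1]^2$ is as follows: (a) On $p_2=\lambda_0$: for $\lambda_0\le p_1\le\rho_1$, $(p_1,\lambda_0)\in\Phi_{B_b}$; for $\rho_1<p_1\le\lambda_1$, $(p_1,\lambda_0)\in\Phi_{B_1}$. (b) On $p_2=\lambda_1$: for $\rho_2\le p_1\le\lambda_1$, $(p_1,\lambda_1)\in\Phi_{B_b}$; for $\lambda_0\le p_1<\rho_2$, $(p_1,\lambda_1)\in\Phi_{B_2}$. (c) On $p_1=\lambda_0$: for $\lambda_0\le p_2\le\rho_1$, $(\lambda_0,p_2)\in\Phi_{B_b}$; for $\rho_1<p_2\le\lambda_1$, $(\lambda_0,p_2)\in\Phi_{B_2}$. (d) On $p_1=\lambda_1$: for $\rho_2\le p_2\le\lambda_1$, $(\lambda_1,p_2)\in\Phi_{B_b}$; for $\lambda_0\le p_2<\rho_2$, $(\lambda_1,p_2)\in\Phi_{B_1}$.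
   Context: Fix parameters $0\le\lambda_0\le\lambda_1\le 1$, a discount factor $\beta\in[0,1)$, and rates $0<R_l<R_h<2R_l$. Let $\alpha=\lambda_1-\lambda_0$ and $T(p)=\alpha p+\lambda_0$. The model consists of two independent, identical Gilbert–Elliott channels with $\Pr[\text{good}\mid\text{good}]=\lambda_1$ and $\Pr[\text{good}\mid\text{bad}]=\lambda_0$. The belief state is $(p_1,p_2)\in[0,1]^2$, and there are three actions, $B_b$, $B_1$ and $B_2$. Let $V:[0,1]^2\to\mathbb R$ be the optimal expected total discounted reward, i.e. the unique bounded function satisfying $V=\max\{V_{B_b},V_{B_1},V_{B_2}\}$, where $V_{B_b}(p_1,p_2)=p_1R_l+p_2R_l+\beta[(1-p_1)(1-p_2)V(\lambda_0,\lambda_0)+p_1(1-p_2)V(\lambda_1,\lambda_0)+(1-p_1)p_2V(\lambda_0,\lambda_1)+p_1p_2V(\lambda_1,\lambda_1)]$, $V_{B_1}(p_1,p_2)=p_1R_h+\beta[(1-p_1)V(\lambda_0,T(p_2))+p_1V(\lambda_1,T(p_2))]$, $V_{B_2}(p_1,p_2)=p_2R_h+\beta[(1-p_2)V(T(p_1),\lambda_0)+p_2V(T(p_1),\lambda_1)]$. For $a\in\{B_b,B_1,B_2\}$, the decision region is $\Phi_a=\{(p_1,p_2)\in[0,1]^2: V(p_1,p_2)=V_a(p_1,p_2)\}$. The thresholds $\rho_1,\rho_2\in[\lambda_0,\lambda_1]$ are defined by $\{p_1\in[\lambda_0,\lambda_1]:(p_1,\lambda_0)\in\Phi_{B_b}\}=[\lambda_0,\rho_1]$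 and $\{p_1\in[\lambda_0,\lambda_1]:(p_1,\lambda_1)\in\Phi_{B_b}\}=[\rho_2,\lambda_1]$; the paper establishes that both sets are intervals of this form. *)

(* Defs.v *)
From Stdlib Require Import Reals.
Open Scope R_scope.

Definition Tmap (l0 l1 p : R) : R := (l1 - l0) * p + l0.

Definition in01 (x : R) : Prop := 0 <= x <= 1.

Inductive action : Type := ABb | AB1 | AB2.

Definition Vact (l0 l1 beta Rl Rh : R) (V : R -> R -> R) (a : action)
    (p1 p2 : R) : R :=
  match a with
  | ABb => p1 * Rl + p2 * Rl +
          beta * ((1 - p1) * (1 - p2) * V l0 l0 + p1 * (1 - p2) * V l1 l0
                  + (1 - p1) * p2 * V l0 l1 + p1 * p2 * V l1 l1)
  | AB1 => p1 * Rh + beta * ((1 - p1) * V l0 (Tmap l0 l1 p2)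
                            + p1 * V l1 (Tmap l0 l1 p2))
  | AB2 => p2 * Rh + beta * ((1 - p2) * V (Tmap l0 l1 p1) l0
                            + p2 * V (Tmap l0 l1 p1) l1)
  end.

(* V is the optimal value function: bounded on [0,1]^2 and solves the
   Bellman equation V = max {V_Bb, V_B1, V_B2} on [0,1]^2 (its unique such
   solution, by the contraction property, since 0 <= beta < 1). *)
Definition is_optimal_value (l0 l1 beta Rl Rh : R) (V : R -> R -> R) : Prop :=
  (exists M, forall p1 p2, in01 p1 -> in01 p2 -> Rabs (V p1 p2) <= M) /\
  (forall p1 p2, in01 p1 -> in01 p2 ->
     V p1 p2 = Rmax (Vact l0 l1 beta Rl Rh V ABb p1 p2)
                    (Rmax (Vact l0 l1 beta Rl Rh V AB1 p1 p2)
                          (Vact l0 l1 beta Rl Rh V AB2 p1 p2))).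

Definition Phi (l0 l1 beta Rl Rh : R) (V : R -> R -> R) (a : action)
    (p1 p2 : R) : Prop :=
  in01 p1 /\ in01 p2 /\ V p1 p2 = Vact l0 l1 beta Rl Rh V a p1 p2.

(* Main.v *)
Require Import Defs.
From Stdlib Require Import Reals Lra Psatz.
Open Scope R_scope.

Lemma abs_inv (x e : R) : Rabs x <= e -> -e <= x <= e.
Proof. unfold Rabs; destruct (Rcase_abs x); lra. Qed.

Lemma rmax_lip (a b c d e : R) : Rabs (a - c) <= e -> Rabs (b - d) <= e ->
  Rabs (Rmax a b - Rmax c d) <= e.
Proof.
  intros H1 H2; apply abs_inv in H1; apply abs_inv in H2; apply Rabs_le.
  unfold Rmax; destruct (Rle_dec a b); destruct (Rle_dec c d); lra.
Qed.

Lemma small_le0 (d c beta : R) : 0 <= c -> 0 <= beta < 1 ->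
  (forall n, d <= c * beta ^ n) -> d <= 0.
Proof.
  intros Hc Hb H. destruct (Rle_dec d 0) as [|Hd]; [assumption|].
  apply Rnot_le_lt in Hd. exfalso.
  assert (Hab : Rabs beta < 1) by (rewrite Rabs_right; lra).
  destruct (pow_lt_1_zero beta Hab (d / (c + 1))) as [N HN].
  { apply Rdiv_lt_0_compat; lra. }
  specialize (HN N (le_n N)). specialize (H N).
  assert (Hp : 0 <= beta ^ N) by (apply pow_le; lra).
  rewrite Rabs_right in HN by lra.
  assert (Hq : (c + 1) * beta ^ N < d).
  { apply Rmult_lt_compat_l with (r := c + 1) in HN; [|lra].
    replace ((c + 1) * (d / (c + 1))) with d in HN by (field; lra). exact HN. }
  nra.
Qed.

Definition Bell l0 l1 beta Rl Rh (W : R -> R -> R) : R -> R -> R :=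
  fun p1 p2 => Rmax (Vact l0 l1 beta Rl Rh W ABb p1 p2)
                 (Rmax (Vact l0 l1 beta Rl Rh W AB1 p1 p2)
                       (Vact l0 l1 beta Rl Rh W AB2 p1 p2)).

Fixpoint Wit l0 l1 beta Rl Rh (n : nat) : R -> R -> R :=
  match n with
  | O => fun _ _ => 0
  | S k => Bell l0 l1 beta Rl Rh (Wit l0 l1 beta Rl Rh k)
  end.

Lemma T01 l0 l1 p : 0 <= l0 -> l0 <= l1 -> l1 <= 1 -> in01 p -> in01 (Tmap l0 l1 p).
Proof. unfold in01, Tmap; intros; split; nra. Qed.

Lemma vact_lip l0 l1 beta Rl Rh W1 W2 e a p1 p2 :
  0 <= l0 -> l0 <= l1 -> l1 <= 1 -> 0 <= beta -> in01 p1 -> in01 p2 ->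
  (forall x y, in01 x -> in01 y -> Rabs (W1 x y - W2 x y) <= e) ->
  Rabs (Vact l0 l1 beta Rl Rh W1 a p1 p2 - Vact l0 l1 beta Rl Rh W2 a p1 p2) <= beta * e.
Proof.
  intros H0 H01 H1 Hb Hp1 Hp2 HW.
  assert (I0 : in01 l0) by (unfold in01; lra).
  assert (I1 : in01 l1) by (unfold in01; lra).
  pose proof (T01 _ _ _ H0 H01 H1 Hp1) as T1.
  pose proof (T01 _ _ _ H0 H01 H1 Hp2) as T2.
  unfold in01 in Hp1, Hp2.
  apply Rabs_le.
  destruct a; simpl.
  - pose proof (abs_inv _ _ (HW _ _ I0 I0)).
    pose proof (abs_inv _ _ (HW _ _ I1 I0)).
    pose proof (abs_inv _ _ (HW _ _ I0 I1)).
    pose proof (abs_inv _ _ (HW _ _ I1 I1)).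
    set (d1 := W1 l0 l0 - W2 l0 l0) in *.
    set (d2 := W1 l1 l0 - W2 l1 l0) in *.
    set (d3 := W1 l0 l1 - W2 l0 l1) in *.
    set (d4 := W1 l1 l1 - W2 l1 l1) in *.
    assert (c1 : 0 <= (1 - p1) * (1 - p2)) by (apply Rmult_le_pos; lra).
    assert (c2 : 0 <= p1 * (1 - p2)) by (apply Rmult_le_pos; lra).
    assert (c3 : 0 <= (1 - p1) * p2) by (apply Rmult_le_pos; lra).
    assert (c4 : 0 <= p1 * p2) by (apply Rmult_le_pos; lra).
    assert (S : -e <= (1-p1)*(1-p2)*d1 + p1*(1-p2)*d2 + (1-p1)*p2*d3 + p1*p2*d4 <= e) by nra.
    replace (p1 * Rl + p2 * Rl + beta * ((1 - p1) * (1 - p2) * W1 l0 l0 + p1 * (1 - p2) * W1 l1 l0 + (1 - p1) * p2 * W1 l0 l1 + p1 * p2 * W1 l1 l1) -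
 (p1 * Rl + p2 * Rl + beta * ((1 - p1) * (1 - p2) * W2 l0 l0 + p1 * (1 - p2) * W2 l1 l0 + (1 - p1) * p2 * W2 l0 l1 + p1 * p2 * W2 l1 l1)))
     with (beta * ((1-p1)*(1-p2)*d1 + p1*(1-p2)*d2 + (1-p1)*p2*d3 + p1*p2*d4)) by (unfold d1, d2, d3, d4; ring).
    nra.
  - pose proof (abs_inv _ _ (HW _ _ I0 T2)).
    pose proof (abs_inv _ _ (HW _ _ I1 T2)).
    set (d1 := W1 l0 (Tmap l0 l1 p2) - W2 l0 (Tmap l0 l1 p2)) in *.
    set (d2 := W1 l1 (Tmap l0 l1 p2) - W2 l1 (Tmap l0 l1 p2)) in *.
    assert (S : -e <= (1-p1)*d1 + p1*d2 <= e) by nra.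
    match goal with |- context [?A - ?B] =>
      replace (A - B) with (beta * ((1-p1)*d1 + p1*d2)) by (unfold d1, d2; ring) end.
    nra.
  - pose proof (abs_inv _ _ (HW _ _ T1 I0)).
    pose proof (abs_inv _ _ (HW _ _ T1 I1)).
    set (d1 := W1 (Tmap l0 l1 p1) l0 - W2 (Tmap l0 l1 p1) l0) in *.
    set (d2 := W1 (Tmap l0 l1 p1) l1 - W2 (Tmap l0 l1 p1) l1) in *.
    assert (S : -e <= (1-p2)*d1 + p2*d2 <= e) by nra.
    match goal with |- context [?A - ?B] =>
      replace (A - B) with (beta * ((1-p2)*d1 + p2*d2)) by (unfold d1, d2; ring) end.
    nra.
Qed.

Lemma approx l0 l1 beta Rl Rh V M :
  0 <= l0 -> l0 <= l1 -> l1 <= 1 -> 0 <= beta ->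
  (forall p1 p2, in01 p1 -> in01 p2 -> Rabs (V p1 p2) <= M) ->
  (forall p1 p2, in01 p1 -> in01 p2 -> V p1 p2 = Bell l0 l1 beta Rl Rh V p1 p2) ->
  forall n p1 p2, in01 p1 -> in01 p2 ->
    Rabs (V p1 p2 - Wit l0 l1 beta Rl Rh n p1 p2) <= M * beta ^ n.
Proof.
  intros H0 H01 H1 Hb HM HB n; induction n; intros p1 p2 I1 I2; simpl.
  - rewrite Rminus_0_r, Rmult_1_r; auto.
  - rewrite HB by assumption. unfold Bell.
    replace (M * (beta * beta ^ n)) with (beta * (M * beta ^ n)) by ring.
    repeat apply rmax_lip; apply vact_lip; auto.
Qed.

Definition symW (W : R -> R -> R) := forall x y, W x y = W y x.

Lemma sym_bell l0 l1 beta Rl Rh W : symW W -> symW (Bell l0 l1 beta Rl Rh W).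
Proof.
  intros HS x y. unfold Bell; simpl.
  rewrite (HS l1 l0), (HS l0 (Tmap l0 l1 y)), (HS l1 (Tmap l0 l1 y)),
          (HS l0 (Tmap l0 l1 x)), (HS l1 (Tmap l0 l1 x)).
  rewrite (Rmax_comm (_ * Rh + _) (y * Rh + _)).
  f_equal; try ring; f_equal; ring.
Qed.

Lemma sym_wit l0 l1 beta Rl Rh n : symW (Wit l0 l1 beta Rl Rh n).
Proof. induction n; simpl. - intros x y; reflexivity. - apply sym_bell; auto. Qed.

Definition convW (W : R -> R -> R) := forall x1 x2 y t, in01 x1 -> in01 x2 -> in01 y ->
  0 <= t <= 1 -> W (t * x1 + (1 - t) * x2) y <= t * W x1 y + (1 - t) * W x2 y.

Lemma maxconv t A B C A1 B1 C1 A2 B2 C2 : 0 <= t <= 1 ->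
  A <= t * A1 + (1 - t) * A2 -> B <= t * B1 + (1 - t) * B2 -> C <= t * C1 + (1 - t) * C2 ->
  Rmax A (Rmax B C) <= t * Rmax A1 (Rmax B1 C1) + (1 - t) * Rmax A2 (Rmax B2 C2).
Proof.
  intros Ht HA HB HC.
  pose proof (Rmax_l A1 (Rmax B1 C1)). pose proof (Rmax_r A1 (Rmax B1 C1)).
  pose proof (Rmax_l B1 C1). pose proof (Rmax_r B1 C1).
  pose proof (Rmax_l A2 (Rmax B2 C2)). pose proof (Rmax_r A2 (Rmax B2 C2)).
  pose proof (Rmax_l B2 C2). pose proof (Rmax_r B2 C2).
  repeat apply Rmax_lub; nra.
Qed.

Lemma conv_bell l0 l1 beta Rl Rh W : 0 <= l0 -> l0 <= l1 -> l1 <= 1 -> 0 <= beta ->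
  convW W -> convW (Bell l0 l1 beta Rl Rh W).
Proof.
  intros H0 H01 H1 Hb HC x1 x2 y t I1 I2 Iy Ht. unfold Bell.
  apply maxconv; auto; simpl.
  - right; ring.
  - right; ring.
  - replace (Tmap l0 l1 (t * x1 + (1 - t) * x2)) with
      (t * Tmap l0 l1 x1 + (1 - t) * Tmap l0 l1 x2) by (unfold Tmap; ring).
    assert (I0 : in01 l0) by (unfold in01; lra).
    assert (I1' : in01 l1) by (unfold in01; lra).
    pose proof (HC _ _ l0 t (T01 _ _ _ H0 H01 H1 I1) (T01 _ _ _ H0 H01 H1 I2) I0 Ht).
    pose proof (HC _ _ l1 t (T01 _ _ _ H0 H01 H1 I1) (T01 _ _ _ H0 H01 H1 I2) I1' Ht).
    unfold in01 in Iy.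
    set (a := W (t * Tmap l0 l1 x1 + (1 - t) * Tmap l0 l1 x2) l0) in *.
    set (b := W (t * Tmap l0 l1 x1 + (1 - t) * Tmap l0 l1 x2) l1) in *.
    assert (K : (1 - y) * a + y * b <= (1 - y) * (t * W (Tmap l0 l1 x1) l0 + (1 - t) * W (Tmap l0 l1 x2) l0)
              + y * (t * W (Tmap l0 l1 x1) l1 + (1 - t) * W (Tmap l0 l1 x2) l1)) by nra.
    apply Rmult_le_compat_l with (r := beta) in K; [|lra].
    nra.
Qed.

Lemma conv_wit l0 l1 beta Rl Rh n : 0 <= l0 -> l0 <= l1 -> l1 <= 1 -> 0 <= beta ->
  convW (Wit l0 l1 beta Rl Rh n).
Proof.
  intros; induction n; simpl.
  - intros x1 x2 y t _ _ _ _; lra.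
  - apply conv_bell; auto.
Qed.

Lemma V_props l0 l1 beta Rl Rh V :
  0 <= l0 -> l0 <= l1 -> l1 <= 1 -> 0 <= beta < 1 ->
  is_optimal_value l0 l1 beta Rl Rh V ->
  (forall x y, in01 x -> in01 y -> V x y = V y x) /\
  (forall x1 x2 y t, in01 x1 -> in01 x2 -> in01 y ->
     0 <= t <= 1 -> V (t * x1 + (1 - t) * x2) y <= t * V x1 y + (1 - t) * V x2 y).
Proof.
  intros H0 H01 H1 Hb [[M HM] HB].
  assert (HM0 : 0 <= M).
  { assert (I : in01 0) by (unfold in01; lra). pose proof (HM 0 0 I I).
    pose proof (Rabs_pos (V 0 0)); lra. }
  assert (AP := approx l0 l1 beta Rl Rh V M H0 H01 H1 (proj1 Hb) HM HB).
  split.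
  - intros x y Ix Iy.
    assert (D : Rabs (V x y - V y x) <= 0).
    { apply (small_le0 _ (2 * M) beta); [lra|lra|]. intro n.
      pose proof (abs_inv _ _ (AP n x y Ix Iy)).
      pose proof (abs_inv _ _ (AP n y x Iy Ix)).
      rewrite (sym_wit l0 l1 beta Rl Rh n y x) in *.
      apply Rabs_le; lra. }
    pose proof (Rabs_pos (V x y - V y x)).
    assert (Rabs (V x y - V y x) = 0) by lra.
    destruct (Rcase_abs (V x y - V y x)) as [Hn|Hn]; [rewrite Rabs_left in H2|rewrite Rabs_right in H2]; lra.
  - intros x1 x2 y t I1 I2 Iy Ht.
    assert (Iz : in01 (t * x1 + (1 - t) * x2)) by (unfold in01 in *; split; nra).
    assert (D : V (t * x1 + (1 - t) * x2) y - (t * V x1 y + (1 - t) * V x2 y) <= 0).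
    { apply (small_le0 _ (2 * M) beta); [lra|lra|]. intro n.
      pose proof (abs_inv _ _ (AP n _ _ Iz Iy)).
      pose proof (abs_inv _ _ (AP n _ _ I1 Iy)).
      pose proof (abs_inv _ _ (AP n _ _ I2 Iy)).
      pose proof (conv_wit l0 l1 beta Rl Rh n H0 H01 H1 (proj1 Hb) x1 x2 y t I1 I2 Iy Ht).
      assert (0 <= M * beta ^ n) by (apply Rmult_le_pos; [lra|apply pow_le; lra]).
      nra. }
    lra.
Qed.

Lemma Bb_ge_B2 l0 l1 beta Rl Rh V p1 p2 :
  0 <= l0 -> l0 <= l1 -> l1 <= 1 -> 0 <= beta < 1 -> 0 < Rl -> Rl < Rh -> Rh < 2 * Rl ->
  is_optimal_value l0 l1 beta Rl Rh V -> in01 p1 -> in01 p2 -> p2 <= p1 ->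
  Vact l0 l1 beta Rl Rh V AB2 p1 p2 <= Vact l0 l1 beta Rl Rh V ABb p1 p2.
Proof.
  intros H0 H01 H1 Hb HRl HRlh HRh HV I1 I2 Hp.
  destruct (V_props _ _ _ _ _ _ H0 H01 H1 Hb HV) as [_ HC].
  assert (I0 : in01 l0) by (unfold in01; lra).
  assert (I1' : in01 l1) by (unfold in01; lra).
  assert (Ht : 0 <= p1 <= 1) by exact I1.
  pose proof (HC l1 l0 l0 p1 I1' I0 I0 Ht) as J1.
  pose proof (HC l1 l0 l1 p1 I1' I0 I1' Ht) as J2.
  replace (p1 * l1 + (1 - p1) * l0) with (Tmap l0 l1 p1) in J1, J2 by (unfold Tmap; ring).
  unfold in01 in I2, I1.
  assert (X : 0 <= (1 - p2) * (p1 * V l1 l0 + (1 - p1) * V l0 l0 - V (Tmap l0 l1 p1) l0)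
                 + p2 * (p1 * V l1 l1 + (1 - p1) * V l0 l1 - V (Tmap l0 l1 p1) l1)).
  { apply Rplus_le_le_0_compat; apply Rmult_le_pos; lra. }
  assert (Y : 0 <= beta * ((1 - p2) * (p1 * V l1 l0 + (1 - p1) * V l0 l0 - V (Tmap l0 l1 p1) l0)
                 + p2 * (p1 * V l1 l1 + (1 - p1) * V l0 l1 - V (Tmap l0 l1 p1) l1)))
    by (apply Rmult_le_pos; lra).
  assert (Z : 0 <= p1 * Rl + p2 * Rl - p2 * Rh) by nra.
  simpl. nra.
Qed.

Lemma swapPhi l0 l1 beta Rl Rh V p1 p2 :
  0 <= l0 -> l0 <= l1 -> l1 <= 1 ->
  (forall x y, in01 x -> in01 y -> V x y = V y x) ->
  (Phi l0 l1 beta Rl Rh V ABb p1 p2 -> Phi l0 l1 beta Rl Rh V ABb p2 p1) /\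
  (Phi l0 l1 beta Rl Rh V AB1 p1 p2 -> Phi l0 l1 beta Rl Rh V AB2 p2 p1) /\
  (Phi l0 l1 beta Rl Rh V AB2 p1 p2 -> Phi l0 l1 beta Rl Rh V AB1 p2 p1).
Proof.
  intros H0 H01 H1 HS.
  assert (I0 : in01 l0) by (unfold in01; lra).
  assert (I1' : in01 l1) by (unfold in01; lra).
  unfold Phi; simpl; split; [|split]; intros [Ia [Ib E]]; (split; [exact Ib|split; [exact Ia|]]).
  - rewrite HS by auto. rewrite E, (HS l1 l0) by auto. ring.
  - rewrite HS by auto. rewrite E.
    pose proof (T01 _ _ _ H0 H01 H1 Ib).
    rewrite (HS l0 (Tmap l0 l1 p2)), (HS l1 (Tmap l0 l1 p2)) by auto. ring.
  - rewrite HS by auto. rewrite E.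
    pose proof (T01 _ _ _ H0 H01 H1 Ia).
    rewrite (HS (Tmap l0 l1 p1) l0), (HS (Tmap l0 l1 p1) l1) by auto. ring.
Qed.

Lemma pick_b V a b c : V = Rmax a (Rmax b c) -> c <= a -> V <> a -> V = b.
Proof. unfold Rmax; destruct (Rle_dec b c); destruct (Rle_dec a _); intros; lra. Qed.
Lemma pick_c V a b c : V = Rmax a (Rmax b c) -> b <= a -> V <> a -> V = c.
Proof. unfold Rmax; destruct (Rle_dec b c); destruct (Rle_dec a _); intros; lra. Qed.

Theorem theorem6 (l0 l1 beta Rl Rh : R) (V : R -> R -> R) (rho1 rho2 : R)
  (Hl0 : 0 <= l0) (Hl01 : l0 <= l1) (Hl1 : l1 <= 1)
  (Hbeta : 0 <= beta < 1)
  (HRl : 0 < Rl) (HRlh : Rl < Rh) (HRh : Rh < 2 * Rl)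
  (HV : is_optimal_value l0 l1 beta Rl Rh V)
  (Hrho1 : l0 <= rho1 <= l1) (Hrho2 : l0 <= rho2 <= l1)
  (Hdef1 : forall p1, l0 <= p1 <= l1 ->
             (Phi l0 l1 beta Rl Rh V ABb p1 l0 <-> p1 <= rho1))
  (Hdef2 : forall p1, l0 <= p1 <= l1 ->
             (Phi l0 l1 beta Rl Rh V ABb p1 l1 <-> rho2 <= p1)) :
  (* (a) *)
  (forall p1, l0 <= p1 <= rho1 -> Phi l0 l1 beta Rl Rh V ABb p1 l0) /\
  (forall p1, rho1 < p1 <= l1 -> Phi l0 l1 beta Rl Rh V AB1 p1 l0) /\
  (* (b) *)
  (forall p1, rho2 <= p1 <= l1 -> Phi l0 l1 beta Rl Rh V ABb p1 l1) /\
  (forall p1, l0 <= p1 < rho2 -> Phi l0 l1 beta Rl Rh V AB2 p1 l1) /\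
  (* (c) *)
  (forall p2, l0 <= p2 <= rho1 -> Phi l0 l1 beta Rl Rh V ABb l0 p2) /\
  (forall p2, rho1 < p2 <= l1 -> Phi l0 l1 beta Rl Rh V AB2 l0 p2) /\
  (* (d) *)
  (forall p2, rho2 <= p2 <= l1 -> Phi l0 l1 beta Rl Rh V ABb l1 p2) /\
  (forall p2, l0 <= p2 < rho2 -> Phi l0 l1 beta Rl Rh V AB1 l1 p2).
Proof.
  destruct (V_props _ _ _ _ _ _ Hl0 Hl01 Hl1 Hbeta HV) as [HS _].
  pose proof HV as [_ HB].
  assert (I0 : in01 l0) by (unfold in01; lra).
  assert (I1 : in01 l1) by (unfold in01; lra).
  assert (A1 : forall p1, l0 <= p1 <= rho1 -> Phi l0 l1 beta Rl Rh V ABb p1 l0).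
  { intros p1 Hp; apply Hdef1; lra. }
  assert (A2 : forall p1, rho1 < p1 <= l1 -> Phi l0 l1 beta Rl Rh V AB1 p1 l0).
  { intros p1 Hp. assert (Ip : in01 p1) by (unfold in01; lra).
    split; [exact Ip|split; [exact I0|]].
    apply (pick_b _ (Vact l0 l1 beta Rl Rh V ABb p1 l0) _ (Vact l0 l1 beta Rl Rh V AB2 p1 l0)).
    - apply HB; auto.
    - apply Bb_ge_B2; auto; lra.
    - intro E. assert (p1 <= rho1) by (apply (proj1 (Hdef1 p1 ltac:(lra))); exact (conj Ip (conj I0 E))). lra. }
  assert (B1 : forall p1, rho2 <= p1 <= l1 -> Phi l0 l1 beta Rl Rh V ABb p1 l1).
  { intros p1 Hp; apply Hdef2; lra. }
  assert (B2 : forall p1, l0 <= p1 < rho2 -> Phi l0 l1 beta Rl Rh V AB2 p1 l1).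
  { intros p1 Hp. assert (Ip : in01 p1) by (unfold in01; lra).
    split; [exact Ip|split; [exact I1|]].
    apply (pick_c _ (Vact l0 l1 beta Rl Rh V ABb p1 l1) (Vact l0 l1 beta Rl Rh V AB1 p1 l1)).
    - apply HB; auto.
    -
      assert (Hq := Bb_ge_B2 _ _ _ _ _ _ l1 p1 Hl0 Hl01 Hl1 Hbeta HRl HRlh HRh HV I1 Ip ltac:(lra)).
      pose proof (T01 _ _ _ Hl0 Hl01 Hl1 I1) as T1.
      simpl in *.
      rewrite (HS l0 (Tmap l0 l1 l1)), (HS l1 (Tmap l0 l1 l1)), (HS l1 l0) by auto.
      rewrite (HS l1 l0) in Hq by auto; lra.
    - intro E. assert (rho2 <= p1) by (apply (proj1 (Hdef2 p1 ltac:(lra))); exact (conj Ip (conj I1 E))). lra. }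
  split; [exact A1|]. split; [exact A2|]. split; [exact B1|]. split; [exact B2|].
  split; [|split; [|split]].
  - intros p2 Hp. assert (Ip : in01 p2) by (unfold in01; lra).
    apply (proj1 (swapPhi _ _ _ _ _ _ p2 l0 Hl0 Hl01 Hl1 HS)); auto.
  - intros p2 Hp. assert (Ip : in01 p2) by (unfold in01; lra).
    apply (proj1 (proj2 (swapPhi _ _ _ _ _ _ p2 l0 Hl0 Hl01 Hl1 HS))); auto.
  - intros p2 Hp. assert (Ip : in01 p2) by (unfold in01; lra).
    apply (proj1 (swapPhi _ _ _ _ _ _ p2 l1 Hl0 Hl01 Hl1 HS)); auto.
  - intros p2 Hp. assert (Ip : in01 p2) by (unfold in01; lra).
    apply (proj2 (proj2 (swapPhi _ _ _ _ _ _ p2 l1 Hl0 Hl01 Hl1 HS))); auto.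
Qed.
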